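(* Let $k\ge 0$ be an integer. A finite nonempty subset $\sigma\subseteq\mathbb{Z}^2$ is a simplex of $\mathrm{VR}(\mathbb{Z}^2;k)$ if and only if $\bigcap_{v\in\sigma}B_{\mathbb{R}^2}(v,\tfrac{k+1}{2})\neq\emptyset$.
   Context: $\mathbb{Z}^2$ and $\mathbb{R}^2$ carry the $l^1$ metric $d((x,y),(x',y'))=|x-x'|+|y-y'|$, and $B_{\mathbb{R}^2}(v,r)=\{p\in\mathbb{R}^2: d(p,v)< r\}$ is the open $l^1$ ball. $\mathrm{VR}(X;r)$ is the simplicial complex on vertex set $X$ whose simplices are the finite nonempty subsets of diameter at most $r$. *)

(* Defs.v *)
From Stdlib Require Import ZArith Reals List.
Open Scope R_scope.

Definition dZ (p q : Z * Z) : Z :=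
  (Z.abs (fst p - fst q) + Z.abs (snd p - snd q))%Z.

Definition dR (p q : R * R) : R :=
  Rabs (fst p - fst q) + Rabs (snd p - snd q).

Definition ZZtoRR (v : Z * Z) : R * R := (IZR (fst v), IZR (snd v)).

Definition ballR2 (c : R * R) (r : R) (p : R * R) : Prop := dR p c < r.

(* A finite nonempty subset sigma of Z^2 (given by a nonempty list of its
   elements) is a simplex of VR(Z^2; r) iff its diameter is at most r. *)
Definition is_VR_simplex (r : R) (sigma : list (Z * Z)) : Prop :=
  sigma <> nil /\
  forall u v, In u sigma -> In v sigma -> IZR (dZ u v) <= r.

(* Main.v *)
Require Import Defs.
From Stdlib Require Import ZArith Reals List Lra Lia.
Open Scope R_scope.

Lemma list_max (f : Z * Z -> R) (l : list (Z * Z)) :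
  l <> nil -> exists w, In w l /\ forall v, In v l -> f v <= f w.
Proof.
  induction l as [|a l IH]; intros H; [congruence|].
  destruct l as [|b l'].
  - exists a; split; [left; auto|]. intros v [<-|[]]; lra.
  - destruct IH as [w [Hw Hm]]; [discriminate|].
    destruct (Rle_dec (f a) (f w)).
    + exists w; split; [right; auto|]. intros v [<-|Hv]; [lra|auto].
    + exists a; split; [left; auto|]. intros v [<-|Hv]; [lra|].
      specialize (Hm v Hv); lra.
Qed.

Lemma IZR_dZ u v : IZR (dZ u v) =
  Rabs (IZR (fst u) - IZR (fst v)) + Rabs (IZR (snd u) - IZR (snd v)).
Proof.
  unfold dZ. rewrite plus_IZR, !abs_IZR, !minus_IZR. reflexivity.
Qed.

Lemma rot x y r : Rabs (x + y) < r -> Rabs (x - y) < r -> Rabs x + Rabs y < r.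
Proof. intros H1 H2. unfold Rabs in *. repeat destruct Rcase_abs; lra. Qed.

Lemma fa_le (u v : Z * Z) :
  IZR (fst u) + IZR (snd u) - (IZR (fst v) + IZR (snd v)) <= IZR (dZ u v) /\
  IZR (fst u) - IZR (snd u) - (IZR (fst v) - IZR (snd v)) <= IZR (dZ u v).
Proof.
  rewrite IZR_dZ. unfold Rabs; repeat destruct Rcase_abs; split; lra.
Qed.

Theorem corollary4p3 (k : nat) (sigma : list (Z * Z)) :
  sigma <> nil ->
  (is_VR_simplex (INR k) sigma <->
   exists p : R * R, forall v, In v sigma ->
     ballR2 (ZZtoRR v) ((INR k + 1) / 2) p).
Proof.
  intros Hne; split.
  - intros [_ Hd].
    set (fa := fun v : Z * Z => IZR (fst v) + IZR (snd v)).
    set (fb := fun v : Z * Z => IZR (fst v) - IZR (snd v)).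
    destruct (list_max fa sigma Hne) as [w1 [I1 M1]].
    destruct (list_max (fun v => - fa v) sigma Hne) as [w2 [I2 M2]].
    destruct (list_max fb sigma Hne) as [w3 [I3 M3]].
    destruct (list_max (fun v => - fb v) sigma Hne) as [w4 [I4 M4]].
    pose proof (Hd _ _ I1 I2) as D12. pose proof (Hd _ _ I3 I4) as D34.
    destruct (fa_le w1 w2) as [E12 _]. destruct (fa_le w3 w4) as [_ E34].
    set (a0 := (fa w1 + fa w2) / 2). set (b0 := (fb w3 + fb w4) / 2).
    exists ((a0 + b0) / 2, (a0 - b0) / 2).
    intros v Hv. unfold ballR2, dR, ZZtoRR; simpl.
    specialize (M1 v Hv); specialize (M2 v Hv); specialize (M3 v Hv); specialize (M4 v Hv).
    unfold fa, fb in *. unfold a0, b0, fa, fb in *.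
    apply rot; apply Rabs_def1; lra.
  - intros [p Hp]. split; [exact Hne|].
    intros u v Hu Hv.
    pose proof (Hp u Hu) as H1. pose proof (Hp v Hv) as H2.
    unfold ballR2, dR, ZZtoRR in *; simpl in *.
    assert (Hlt : IZR (dZ u v) < INR k + 1).
    { rewrite IZR_dZ.
      destruct p as [px py]; simpl in *.
      unfold Rabs in *; repeat destruct Rcase_abs; lra. }
    rewrite INR_IZR_INZ in *.
    rewrite <- plus_IZR in Hlt. apply lt_IZR in Hlt. apply IZR_le. lia.
Qed.
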